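(* Let $s\geq1$, let $q$ be a prime power and let $C^{(1)},\ldots,C^{(s)}\in\mathbb{F}_q^{\mathbb{N}\times\mathbb{N}_0}$ be finite-row generating matrices having optimal row-lengths and yielding, via Algorithm 1 (for some admissible choice of the bijections), a $(\mathbf{T},s)$-sequence in base $q$ with $\mathbf{T}\equiv 0$. Let $(s_n)_{n\geq0}$ be a sequence in $\mathbb{Z}_q$. Then, for any choice of bijections $\psi_r$, $\lambda_{i,j}$, the sequence produced by Algorithm 2 with these matrices and input $(s_n)_{n\ge0}$ is uniformly distributed in $[0,1]^s$ if and only if $(s_n)_{n\geq0}$ is uniformly distributed in $\mathbb{Z}_q$.
   Context: $\mathbb{F}_q$ is the finite field with $q$ elements, $D_q=\{0,\ldots,q-1\}$. $\mathbb{Z}_q$ is the ring of $q$-adic integers; each $z\in\mathbb{Z}_q$ has a unique representation $z=\sum_{r\ge0}a_rq^r$, $a_r\in D_q$ (the base-$q$ expansion for nonnegative integers), and $\tau_k(z)=\sum_{r<k}a_rq^r$. $(x_n)$ in $\mathbb{Z}_q$ is uniformly distributed in $\mathbb{Z}_q$ if for all $k\ge1$ and $0\le a<q^k$, $\frac1N\#\{n<N:\tau_k(x_n)\equiv a\bmod q^k\}\to q^{-k}$. A matrix $C^{(i)}=(c^{(i)}_{j,r})_{j\ge1,r\ge0}$ is finite-row if each row has finitely many nonzero entries. The length of row $j$ of $C^{(i)}$ is $\sup\{r:c^{(i)}_{j,r}\neq0\}+1$; the matrices have optimal row-lengths if for all $i\in\{1,\ldots,s\}$ and $j\ge1$ the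 length of row $j$ of $C^{(i)}$ is at most $sj$. Algorithm 2: choose bijections $\psi_r:D_q\to\mathbb{F}_q$ ($r\ge0$), finite-row matrices $C^{(i)}$, bijections $\lambda_{i,j}:\mathbb{F}_q\to D_q$, and $(s_n)$ in $\mathbb{Z}_q$; with $s_n=\sum_r a_rq^r$ put $x_n^{(i)}=\sum_{j\ge1}\lambda_{i,j}(\sum_r c^{(i)}_{j,r}\psi_r(a_r))q^{-j}$, $\boldsymbol{x}_n=(x_n^{(1)},\dots,x_n^{(s)})$. Algorithm 1 is the same with $s_n=n$ and $\psi_r(0)=0$ for all large $r$. The truncation $[x_n^{(i)}]_{q,m}$ is $\sum_{j=1}^m\lambda_{i,j}(\cdots)q^{-j}$ (truncation of this digit expansion), applied coordinatewise to vectors. An elementary interval in base $q$ is $\prod_{i=1}^s[a_iq^{-d_i},(a_i+1)q^{-d_i})$ with integers $d_i\ge0$, $0\le a_i<q^{d_i}$. For integers $0\le t\le m$, a $(t,m,s)$-net in base $q$ is a set of $q^m$ points in $[0,1)^s$ such that every elementary interval of volume $q^{t-m}$ contains exactly $q^t$ of them. For $\mathbf{T}:\mathbb{N}_0\to\mathbb{N}_0$ with $\mathbf{T}(m)\le m$, a sequence $(\boldsymbol{x}_n)$ in $[0,1]^s$ is a $(\mathbf{T},s)$-sequence in base $q$ if for all $k\ge0$ and all $m$ with $\mathbf{T}(m)<m$ the points $[\boldsymbol{x}_n]_{q,m}$, $kq^m\le n<(k+1)q^m$, form a $(\mathbf{T}(m),m,s)$-net in base $q$. A sequence in $[0,1]^s$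 is uniformly distributed if the star discrepancy $\sup_J|A(J)/N-\mathrm{vol}(J)|$ of its first $N$ terms (sup over subintervals $J\subseteq[0,1]^s$ with a vertex at the origin, $A(J)=\#\{n<N:\boldsymbol{x}_n\in J\}$) tends to $0$. *)

(* Defs.v *)
From HB Require Import structures.
From mathcomp Require Import all_boot all_order all_algebra.
From mathcomp Require Import boolp classical_sets reals ereal topology normedtype sequences.
Set Implicit Arguments. Unset Strict Implicit. Unset Printing Implicit Defensive.
Import Order.TTheory GRing.Theory Num.Theory numFieldNormedType.Exports.
Local Open Scope classical_set_scope.
Local Open Scope ring_scope.

(* The finite field F_q is F, with q := #|F| (automatically a prime power).
   Digits D_q = {0,...,q-1} are the ordinals 'I_#|F|. *)

Lemma card_field_gt0 (F : finFieldType) : (0 < #|F|)%N.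
Proof. by apply/card_gt0P; exists 0. Qed.

Definition digit0 (F : finFieldType) : 'I_#|F| := Ordinal (card_field_gt0 F).

(* q-adic integers, represented by their (unique) digit sequence (a_r)_{r>=0} *)
Definition zq (F : finFieldType) := nat -> 'I_#|F|.

Definition nat_zq (F : finFieldType) (n : nat) : zq F :=
  fun r => Ordinal (ltn_pmod (n %/ #|F| ^ r) (card_field_gt0 F)).

Definition tau (F : finFieldType) (k : nat) (z : zq F) : nat :=
  (\sum_(r < k) z r * #|F| ^ r)%N.

Definition ud_zq (R : realType) (F : finFieldType) (x : nat -> zq F) : Prop :=
  forall k a, (1 <= k)%N -> (a < #|F| ^ k)%N ->
    let freq : R^nat := fun N =>
       (count (fun n => tau k (x n) == a %[mod #|F| ^ k]) (iota 0 N))%:R / N%:R in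
    let lim : R := #|F|%:R ^- k in
    freq @ \oo --> lim.

(* Generating matrices C^{(i)} = (c^{(i)}_{j,r})_{j>=1, r>=0}; row index 0 unused. *)
Definition finite_row (s : nat) (F : finFieldType) (C : 'I_s -> nat -> nat -> F) : Prop :=
  forall i j, (1 <= j)%N -> exists L, forall r, (L <= r)%N -> C i j r = 0.

Definition optimal_row_lengths (s : nat) (F : finFieldType)
    (C : 'I_s -> nat -> nat -> F) : Prop :=
  forall i j, (1 <= j)%N -> forall r, (s * j <= r)%N -> C i j r = 0.

(* The sum over r is truncated at s*j, which is exact under optimal row-lengths
   (all further entries vanish). *)
Definition alg_digit (s : nat) (F : finFieldType) (C : 'I_s -> nat -> nat -> F)
    (psi : nat -> 'I_#|F| -> F) (lam : 'I_s -> nat -> F -> 'I_#|F|)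
    (z : zq F) (i : 'I_s) (j : nat) : 'I_#|F| :=
  lam i j (\sum_(r < s * j) C i j r * psi r (z r)).

Definition alg_point (R : realType) (s : nat) (F : finFieldType)
    (C : 'I_s -> nat -> nat -> F) (psi : nat -> 'I_#|F| -> F)
    (lam : 'I_s -> nat -> F -> 'I_#|F|) (z : zq F) : 'I_s -> R :=
  fun i => limn (fun N : nat =>
    \sum_(1 <= j < N) ((alg_digit C psi lam z i j : nat)%:R / #|F|%:R ^+ j : R)).

Definition alg_trunc (R : realType) (s : nat) (F : finFieldType)
    (C : 'I_s -> nat -> nat -> F) (psi : nat -> 'I_#|F| -> F)
    (lam : 'I_s -> nat -> F -> 'I_#|F|) (m : nat) (z : zq F) : 'I_s -> R :=
  fun i => \sum_(1 <= j < m.+1) ((alg_digit C psi lam z i j : nat)%:R / #|F|%:R ^+ j).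

Definition in_elementary (R : realType) (s q : nat) (d a : 'I_s -> nat)
    (y : 'I_s -> R) : bool :=
  [forall i, ((a i)%:R / q%:R ^+ d i <= y i) && (y i < (a i).+1%:R / q%:R ^+ d i)].

Definition is_net (R : realType) (s q t m : nat) (P : nat -> 'I_s -> R)
    (start : nat) : Prop :=
  forall (d a : 'I_s -> nat), (\sum_i d i)%N = (m - t)%N ->
    (forall i, (a i < q ^ d i)%N) ->
    count (fun n => in_elementary q d a (P n)) (iota start (q ^ m)) = (q ^ t)%N.

Definition is_Tseq (R : realType) (s q : nat) (T : nat -> nat)
    (x : nat -> 'I_s -> R) (tr : nat -> nat -> 'I_s -> R) : Prop :=
  (forall n i, 0 <= x n i <= 1) /\ (forall m, (T m <= m)%N) /\
  forall k m, (T m < m)%N -> is_net q (T m) m (tr m) (k * q ^ m).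

Definition star_discrepancy (R : realType) (s : nat) (x : nat -> 'I_s -> R)
    (N : nat) : R :=
  sup [set `| (count (fun n => [forall i, (0 <= x n i) && (x n i < t i)])
                      (iota 0 N))%:R / N%:R - \prod_i t i |
      | t in [set t : 'I_s -> R | forall i, 0 <= t i <= 1]].

Definition ud_cube (R : realType) (s : nat) (x : nat -> 'I_s -> R) : Prop :=
  let D : R^nat := star_discrepancy x in D @ \oo --> (0 : R).

(* Main.v *)
Require Import Defs.
From HB Require Import structures.
From mathcomp Require Import all_boot all_order all_algebra.
From mathcomp Require Import boolp classical_sets reals ereal topology normedtype sequences.
From mathcomp Require Import zify ring lra.
Set Implicit Arguments. Unset Strict Implicit. Unset Printing Implicit Defensive.
Import Order.TTheory GRing.Theory Num.Theory numFieldNormedType.Exports.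
Local Open Scope ring_scope.

Section Part0.

Lemma q_gt1 (F : finFieldType) : (1 < #|F|)%N.
Proof. apply/card_gt1P; exists (0:F), (1:F); split => //; rewrite eq_sym; exact: oner_neq0. Qed.

Fixpoint hval (q : nat) (d : nat -> nat) (m : nat) : nat :=
  if m is m'.+1 then (hval q d m' * q + d m)%N else 0%N.

Lemma hval_lt q d m : (forall j, d j < q)%N -> (hval q d m < q ^ m)%N.
Proof.
move=> hd; elim: m => [|m IH] //=.
have h1 : ((hval q d m).+1 * q <= q ^ m * q)%N by rewrite leq_mul2r IH orbT.
have := hd m.+1; rewrite expnSr; nia.
Qed.

Lemma hval_inj q d d' m : (forall j, d j < q)%N -> (forall j, d' j < q)%N ->
  hval q d m = hval q d' m -> forall j, (1 <= j <= m)%N -> d j = d' j.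
Proof.
move=> hd hd'; elim: m => [|m IH] /=; first by move=> _ j; rewrite leqn0 => /andP[]; case: j.
move=> e.
have q0 : (0 < q)%N by have := hd 0%N; case: q {hd hd' e IH}.
have e1 : d m.+1 = d' m.+1.
  have := congr1 (modn^~ q) e; rewrite !modnMDl !modn_small //.
have e2 : hval q d m = hval q d' m.
  have := congr1 (divn^~ q) e; rewrite !divnMDl // !divn_small //; lia.
move=> j /andP[j1 jm]; rewrite leq_eqVlt in jm; case/orP: jm => [/eqP -> //|jm].
by apply: IH => //; rewrite j1.
Qed.

Lemma hval_range q d m l : (forall j, d j < q)%N ->
  (hval q d m * q ^ l <= hval q d (m + l) < (hval q d m).+1 * q ^ l)%N.
Proof.
move=> hd; elim: l => [|l IH]; first by rewrite addn0 !expn0 !muln1 leqnn ltnSn.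
rewrite addnS /= expnS; case/andP: IH => h1 h2; have := hd (m + l).+1.
nia.
Qed.

Lemma divmod_uniq (a b x y p : nat) : (a < p)%N -> (b < p)%N ->
  (a + x * p = b + y * p)%N -> x = y /\ a = b.
Proof.
move=> ha hb e; have p0 : (0 < p)%N by case: p ha {hb e}.
have e1 := congr1 (divn^~ p) e; have e2 := congr1 (modn^~ p) e; simpl in e1, e2.
rewrite ![(_ + _ * p)%N]addnC in e1 e2.
rewrite !divnMDl // !divn_small // !addn0 in e1.
by rewrite !modnMDl !modn_small in e2.
Qed.

Lemma tau_lt (F : finFieldType) k (z : zq F) : (tau k z < #|F| ^ k)%N.
Proof.
rewrite /tau; elim: k => [|k IH]; first by rewrite big_ord0 expn0.
rewrite big_ord_recr /= expnS.
have := ltn_ord (z k); have := IH; set S := (\sum_(i < k) _)%N => h1 h2.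
apply: (@leq_trans ((z k).+1 * #|F| ^ k)%N).
  by rewrite mulSn; exact: (leq_add h1 (leqnn _)).
by rewrite leq_mul2r h2 orbT.
Qed.

Lemma tau_inj (F : finFieldType) k (z z' : zq F) :
  tau k z = tau k z' -> forall r, (r < k)%N -> z r = z' r.
Proof.
elim: k => [|k IH] //; rewrite /tau !big_ord_recr /= => e.
have p0 : (0 < #|F| ^ k)%N by rewrite expn_gt0 card_field_gt0.
have t1 := tau_lt k z; have t2 := tau_lt k z'; rewrite /tau in t1 t2.
have [e1 e2] := divmod_uniq t1 t2 e.
move=> r; rewrite ltnS leq_eqVlt => /orP[/eqP -> |]; first exact: val_inj.
exact: IH.
Qed.

End Part0.

Section Part1.

Lemma hval_real (R : realType) q d m : (0 < q)%N ->
  \sum_(1 <= j < m.+1) ((d j)%:R / q%:R ^+ j : R) = (hval q d m)%:R / q%:R ^+ m.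
Proof.
move=> q0; have qR : q%:R != 0 :> R by rewrite pnatr_eq0 -lt0n.
elim: m => [|m IH]; first by rewrite big_geq // mul0r.
rewrite big_nat_recr //= IH natrD natrM exprSr.
field; by rewrite qR expf_neq0.
Qed.

Section Alg.
Variables (R : realType) (F : finFieldType) (s : nat) (C : 'I_s -> nat -> nat -> F)
  (psi : nat -> 'I_#|F| -> F) (lam : 'I_s -> nat -> F -> 'I_#|F|).

Definition dg (z : zq F) (i : 'I_s) : nat -> nat := fun j => alg_digit C psi lam z i j.
Lemma dg_lt z i j : (dg z i j < #|F|)%N. Proof. exact: ltn_ord. Qed.

Definition keyv (m : nat) (z : zq F) : {ffun 'I_s -> 'I_(#|F| ^ m)} :=
  [ffun i => Ordinal (hval_lt m (dg_lt z i))].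

Lemma keyvE m z i : keyv m z i = hval #|F| (dg z i) m :> nat.
Proof. by rewrite ffunE. Qed.

Lemma trunc_hval m z i : alg_trunc R C psi lam m z i = (hval #|F| (dg z i) m)%:R / #|F|%:R ^+ m.
Proof. by rewrite /alg_trunc hval_real ?card_field_gt0. Qed.

Let q := #|F|.
Let qR0 : (0 : R) < q%:R. Proof. by rewrite ltr0n card_field_gt0. Qed.

Lemma hval_bounds_real z i m k : (m <= k)%N ->
  (hval q (dg z i) m)%:R / q%:R ^+ m <= (hval q (dg z i) k)%:R / q%:R ^+ k :> R /\
  (hval q (dg z i) k)%:R / q%:R ^+ k < (hval q (dg z i) m).+1%:R / q%:R ^+ m :> R.
Proof.
move=> mk; have := hval_range m (k - m) (dg_lt z i); rewrite subnKC //.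
move=> /andP[h1 h2].
have qk : (0 : R) < q%:R ^+ k by rewrite exprn_gt0.
have qm : (0 : R) < q%:R ^+ m by rewrite exprn_gt0.
have ek : q%:R ^+ k = q%:R ^+ m * q%:R ^+ (k - m) :> R by rewrite -exprD subnKC.
split.
- rewrite ler_pdivlMr // ek mulrA divfK ?gt_eqF // -natrX -natrM ler_nat //.
- rewrite ltr_pdivrMr // ek mulrA divfK ?gt_eqF // -natrX -natrM ltr_nat //.
Qed.

Definition psum (z : zq F) (i : 'I_s) : R^nat := fun N =>
  \sum_(1 <= j < N) ((alg_digit C psi lam z i j : nat)%:R / #|F|%:R ^+ j : R).

Lemma psumE z i N : psum z i N.+1 = (hval q (dg z i) N)%:R / q%:R ^+ N.
Proof. exact: hval_real (card_field_gt0 F). Qed.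

Lemma psum_nd z i : {homo psum z i : n m / (n <= m)%N >-> n <= m}.
Proof.
move=> n m nm; rewrite /psum.
case: (leqP n 1) => n1.
  rewrite big_geq // sumr_ge0 // => j _; by rewrite divr_ge0 // exprn_ge0 // ler0n.
rewrite [X in _ <= X](big_cat_nat _ (n:=n)) //= ?(ltnW n1) // lerDl sumr_ge0 // => j _.
Qed.

Lemma psum_le1 z i N : psum z i N <= 1.
Proof.
case: N => [|N]; first by rewrite /psum big_geq.
rewrite psumE ler_pdivrMr ?exprn_gt0 // mul1r -natrX ler_nat ltnW //.
exact: hval_lt (dg_lt z i).
Qed.

Lemma psum_cvg z i : cvgn (psum z i).
Proof.
apply: cvgP; apply: nondecreasing_cvgn; first exact: psum_nd.
by exists 1 => _ [n _ <-]; exact: psum_le1.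
Qed.

Lemma point_bounds z i m :
  (hval q (dg z i) m)%:R / q%:R ^+ m <= alg_point R C psi lam z i /\
  alg_point R C psi lam z i <= (hval q (dg z i) m).+1%:R / q%:R ^+ m.
Proof.
have -> : alg_point R C psi lam z i = limn (psum z i) by [].
split.
- apply: limr_ge; first exact: psum_cvg.
  exists m.+1 => // N /= hN; rewrite -(prednK (leq_ltn_trans (leq0n m) hN)) psumE.
  by case: (hval_bounds_real z i (m := m) (k := N.-1) _) => //; rewrite -ltnS prednK //; case: N hN.
- apply: limr_le; first exact: psum_cvg.
  exists m.+1 => // N /= hN; rewrite -(prednK (leq_ltn_trans (leq0n m) hN)) psumE.
  case: (hval_bounds_real z i (m := m) (k := N.-1) _) => //; last by move=> _ /ltW.
  by rewrite -ltnS prednK //; case: N hN.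
Qed.

End Alg.

End Part1.

Section Part2.

Lemma hval_ext q d d' m : (forall j, (1 <= j <= m)%N -> d j = d' j) ->
  hval q d m = hval q d' m.
Proof.
elim: m => [|m IH] //= h; rewrite IH ?h ?leqnn // => j /andP[j1 jm]; apply: h.
by rewrite j1 ltnW.
Qed.

Lemma nat_between_eq (R : realType) (a h : nat) (c y : R) : 0 < c ->
  a%:R / c <= y -> y < a.+1%:R / c -> h%:R / c <= y -> y < h.+1%:R / c -> a = h.
Proof.
move=> c0 h1 h2 h3 h4.
have ah : (a < h.+1)%N.
  have := le_lt_trans h1 h4; by rewrite ltr_pM2r ?invr_gt0 // ltr_nat.
have ha : (h < a.+1)%N.
  have := le_lt_trans h3 h2; by rewrite ltr_pM2r ?invr_gt0 // ltr_nat.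
lia.
Qed.

Section Tup.
Variable F : finFieldType.
Definition Tup k := {ffun 'I_k -> 'I_#|F|}.
Definition pre k (z : zq F) : Tup k := [ffun r : 'I_k => z r].
Definition ext k (t : Tup k) : zq F := fun r => odflt (digit0 F) (omap t (insub r)).
Lemma ext_pre k z r : (r < k)%N -> ext (pre k z) r = z r.
Proof. by move=> rk; rewrite /ext insubT /= ffunE. Qed.
Lemma pre_ext k (t : Tup k) : pre k (ext t) = t.
Proof. apply/ffunP => r; rewrite ffunE /ext valK //. Qed.
Lemma pre_eq k z z' : pre k z = pre k z' -> forall r, (r < k)%N -> z r = z' r.
Proof. by move=> e r rk; rewrite -(ext_pre z rk) -(ext_pre z' rk) e. Qed.
Lemma card_Tup k : #|Tup k| = (#|F| ^ k)%N.
Proof. by rewrite card_ffun !card_ord. Qed.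
End Tup.

Lemma bij_ex (A B : Type) (f : A -> B) : bijective f -> forall y, exists x, f x = y.
Proof. by case=> g _ gK y; exists (g y); rewrite gK. Qed.

Section K.
Variables (R : realType) (F : finFieldType) (s : nat) (C : 'I_s -> nat -> nat -> F).

Definition Lraw (v : nat -> F) i j := \sum_(r < s * j) C i j r * v r.

Lemma keyv_loc psi lam m (z z' : zq F) : (forall r, (r < s * m)%N -> z r = z' r) ->
  keyv C psi lam m z = keyv C psi lam m z'.
Proof.
move=> h; apply/ffunP => i; apply: val_inj => /=; rewrite !keyvE; apply: hval_ext.
move=> j /andP[j1 jm]; rewrite /dg /alg_digit; congr (nat_of_ord (lam _ _ _)).
apply: eq_bigr => r _; rewrite h //; apply: (leq_trans (ltn_ord r)).
by rewrite leq_mul2l jm orbT.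
Qed.

Definition Phi psi lam m (t : Tup F (s * m)) := keyv C psi lam m (ext t).

Lemma keyv_Phi psi lam m z : keyv C psi lam m z = Phi psi lam (pre (s * m) z).
Proof. by apply: keyv_loc => r rk; rewrite ext_pre. Qed.

Variables (psi1 : nat -> 'I_#|F| -> F) (lam1 : 'I_s -> nat -> F -> 'I_#|F|).
Hypothesis psi1B : forall r, bijective (psi1 r).
Hypothesis lam1B : forall i j, bijective (lam1 i j).
Hypothesis net : forall k m, (0 < m)%N -> is_net #|F| 0 m
  (fun n => alg_trunc R C psi1 lam1 m (nat_zq F n)) (k * #|F| ^ m).

Lemma Phi1_surj m A : (0 < m)%N -> (0 < s)%N ->
  exists n, keyv C psi1 lam1 m (nat_zq F n) = A.
Proof.
move=> m0 s0; have sm0 : (0 < s * m)%N by rewrite muln_gt0 s0.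
have := net 0 sm0 (d := fun _ => m) (a := fun i => A i).
rewrite mul0n subn0 sum_nat_const card_ord => /(_ erefl (fun i => ltn_ord _)).
rewrite expn0 => hc.
have : has (fun n => in_elementary #|F| (fun=> m) (fun i => A i)
          (alg_trunc R C psi1 lam1 (s * m) (nat_zq F n))) (iota 0 (#|F| ^ (s * m))).
  by rewrite has_count hc.
case/hasP => n _ /forallP hn; exists n; apply/ffunP => i; apply: val_inj => /=; rewrite keyvE.
have /andP[h1 h2] := hn i; rewrite trunc_hval in h1 h2.
have mk : (m <= s * m)%N by rewrite leq_pmull.
have [h3 h4] := hval_bounds_real R C psi1 lam1 (nat_zq F n) i mk.
apply: (nat_between_eq _ h3 h4 h1 h2).
by rewrite exprn_gt0 // ltr0n card_field_gt0.
Qed.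

Lemma Phi1_inj m : (0 < m)%N -> (0 < s)%N -> injective (Phi psi1 lam1 (m:=m)).
Proof.
move=> m0 s0.
suff H : {in predT &, injective (Phi psi1 lam1 (m:=m))} by move=> x y; apply: H.
apply/imset_injP.
have -> : [set Phi psi1 lam1 (m:=m) x | x in predT] = finset.setT.
  apply/setP => A; rewrite inE; have [n <-] := Phi1_surj A m0 s0.
  by apply/imsetP; exists (pre (s * m) (nat_zq F n)) => //; rewrite keyv_Phi.
apply/eqP; rewrite cardsT card_ffun card_ord.
have -> : #|(predT : pred (Tup F (s * m)))| = #|Tup F (s * m)| by [].
by rewrite -expnM mulnC -(card_Tup F) card_ord.
Qed.

Lemma L_inj m (v v' : nat -> F) : (0 < m)%N -> (0 < s)%N ->
  (forall i j, (1 <= j <= m)%N -> Lraw v i j = Lraw v' i j) ->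
  forall r, (r < s * m)%N -> v r = v' r.
Proof.
move=> m0 s0 h.
have [z1 hz1] := @choice nat 'I_#|F| (fun r a => psi1 r a = v r)
   (fun r => bij_ex (psi1B r) (v r)).
have [z2 hz2] := @choice nat 'I_#|F| (fun r a => psi1 r a = v' r)
   (fun r => bij_ex (psi1B r) (v' r)).
have e : keyv C psi1 lam1 m z1 = keyv C psi1 lam1 m z2.
  apply/ffunP => i; apply: val_inj => /=; rewrite !keyvE; apply: hval_ext => j hj.
  rewrite /dg /alg_digit; congr (nat_of_ord (lam1 _ _ _)).
  have := h i j hj; rewrite /Lraw; under eq_bigr do rewrite -hz1.
  by under [X in _ = X -> _]eq_bigr do rewrite -hz2.
rewrite !keyv_Phi in e; have := pre_eq (Phi1_inj m0 s0 e) => he r rk.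
by rewrite -hz1 -hz2 he.
Qed.

Lemma Phi_bij psi lam m : (0 < m)%N -> (0 < s)%N ->
  (forall r, bijective (psi r)) -> (forall i j, bijective (lam i j)) ->
  bijective (Phi psi lam (m:=m)).
Proof.
move=> m0 s0 psiB lamB; apply: inj_card_bij; last first.
  by rewrite card_ffun !card_ord card_Tup -expnM mulnC.
move=> t t' e.
have e2 : forall i j, (1 <= j <= m)%N ->
    Lraw (fun r => psi r (ext t r)) i j = Lraw (fun r => psi r (ext t' r)) i j.
  move=> i j hj; have := congr1 (fun A : {ffun _} => nat_of_ord (A i)) e.
  rewrite /Phi !keyvE => /hval_inj -/(_ (dg_lt _ _ _ _ _) (dg_lt _ _ _ _ _) j hj).
  by move=> /val_inj /(bij_inj (lamB i j)).
have e3 := L_inj m0 s0 e2.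
apply/ffunP => r; have := e3 r (ltn_ord r) => /(bij_inj (psiB r)).
by rewrite /ext valK /=.
Qed.

End K.

End Part2.

Section Part3.
Local Open Scope classical_set_scope.
Local Open Scope ring_scope.

Lemma count_natsum (T : Type) (P : pred T) (s : seq T) :
  count P s = (\sum_(x <- s) (P x : nat))%N.
Proof. by elim: s => [|x s IH]; rewrite ?big_nil ?big_cons //= IH. Qed.

Lemma count_split (T : Type) (I : finType) (P : pred T) (Q : I -> pred T) (s : seq T) :
  (forall n, (P n : nat) = \sum_(d : I) (Q d n : nat))%N ->
  count P s = (\sum_(d : I) count (Q d) s)%N.
Proof.
move=> h; rewrite count_natsum (eq_bigr _ (fun n _ => h n)) exchange_big /=.
by apply: eq_bigr => d _; rewrite count_natsum.
Qed.

Section Freq.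
Variable R : realType.
Definition freq (P : pred nat) (N : nat) : R := (count P (iota 0 N))%:R / N%:R.

Lemma freq_split (I : finType) (P : pred nat) (Q : I -> pred nat) N :
  (forall n, (P n : nat) = \sum_(d : I) (Q d n : nat))%N ->
  freq P N = \sum_(d : I) freq (Q d) N.
Proof.
move=> h; rewrite /freq (count_split _ h) natr_sum mulr_suml //.
Qed.

Lemma freq_ext (P Q : pred nat) N : P =1 Q -> freq P N = freq Q N.
Proof. by move=> e; rewrite /freq (eq_count e). Qed.

Lemma cvg_sumr (I : finType) (f : I -> nat -> R) (l : I -> R) :
  (forall i, f i n @[n --> \oo] --> l i) ->
  (\sum_(i : I) f i n) @[n --> \oo] --> \sum_(i : I) l i.
Proof.
move=> h; apply: cvg_big => //; first exact: add_continuous.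
Qed.
End Freq.

Section ZQ.
Variables (R : realType) (F : finFieldType) (sn : nat -> zq F).

Definition UDP k := forall t : Tup F k,
  freq R (fun n => pre k (sn n) == t) n @[n --> \oo] --> ((#|F|%:R : R) ^+ k)^-1.

Lemma tau_loc k (z z' : zq F) : (forall r, (r < k)%N -> z r = z' r) -> tau k z = tau k z'.
Proof. by move=> h; apply: eq_bigr => r _; rewrite h. Qed.

Lemma tau_pre k (z : zq F) (t : Tup F k) :
  (tau k z == tau k (ext t) %[mod #|F| ^ k]) = (pre k z == t).
Proof.
rewrite !modn_small ?tau_lt //; apply/eqP/eqP => [e|<-].
  have h := tau_inj e; apply/ffunP => r; rewrite ffunE h //.
  by rewrite /ext valK.
by apply: tau_loc => r rk; rewrite ext_pre.
Qed.

Lemma udzq_UDP k : ud_zq R sn -> (1 <= k)%N -> UDP k.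
Proof.
move=> h k1 t; have := h k (tau k (ext t)) k1 (tau_lt _ _) => /=.
by apply: cvg_trans; apply: near_eq_cvg; near=> N; apply: freq_ext => n; rewrite tau_pre.
Unshelve. all: by end_near.
Qed.

Lemma UDP_udzq : (forall k, (1 <= k)%N -> UDP k) -> ud_zq R sn.
Proof.
move=> h k a k1 ak /=.
pose tT (t : Tup F k) : 'I_(#|F| ^ k) := Ordinal (tau_lt k (ext t)).
have tTi : injective tT.
  move=> t t' e0; have /= /tau_inj e := congr1 val e0; apply/ffunP => r.
  by have := e r (ltn_ord r); rewrite /ext valK.
have := inj_card_onto tTi; rewrite card_Tup card_ord => /(_ (leqnn _) (Ordinal ak)).
case/codomP => t e0; have /= -> := congr1 val e0.
have := h k k1 t; apply: cvg_trans; apply: near_eq_cvg; near=> N.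
by apply: freq_ext => n; rewrite tau_pre.
Unshelve. all: by end_near.
Qed.

Definition extd k (t : Tup F k) (d : 'I_#|F|) : Tup F k.+1 :=
  pre k.+1 (fun r => if r == k then d else ext t r).

Lemma UDP_down k : UDP k.+1 -> UDP k.
Proof.
move=> h t.
have e : forall N, freq R (fun n => pre k (sn n) == t) N =
   \sum_(d : 'I_#|F|) freq R (fun n => pre k.+1 (sn n) == extd t d) N.
  move=> N; apply: freq_split => n.
  rewrite (bigD1 (sn n k)) //= big1 ?addn0.
  - congr nat_of_bool; apply/eqP/eqP => [<-|e].
      apply/ffunP => r; rewrite !ffunE /=; case: eqP => [->//|ne].
      by rewrite ext_pre //; have := ltn_ord r; lia.
    apply/ffunP => r; have := congr1 (fun f : {ffun _} => f (widen_ord (leqnSn k) r)) e.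
    by rewrite !ffunE /= (ltn_eqF (ltn_ord r)) /ext valK.
  - move=> d dne; apply/eqP; rewrite eqb0; apply/eqP => e.
    have := congr1 (fun f : {ffun _} => f ord_max) e; rewrite !ffunE /= eqxx => ed.
    by rewrite ed eqxx in dne.
have -> : (#|F|%:R ^+ k)^-1 = \sum_(d : 'I_#|F|) (#|F|%:R ^+ k.+1 : R)^-1.
  have q0 : (#|F|%:R : R) != 0 by rewrite pnatr_eq0 -lt0n card_field_gt0.
  rewrite sumr_const card_ord -mulr_natr exprS; field.
  by rewrite mul1r q0 expf_neq0.
rewrite (funext e); apply: cvg_sumr => d; exact: h.
Qed.

Lemma UDP_le n k : UDP n -> (k <= n)%N -> UDP k.
Proof.
move=> h kn; rewrite -(subKn kn); elim: (n - k)%N (leq_subr k n) => [|l IH] ln.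
  by rewrite subn0.
apply: UDP_down; rewrite -subSn //; apply: IH; lia.
Qed.

End ZQ.

End Part3.

Section Part4.
Local Open Scope classical_set_scope.
Local Open Scope ring_scope.

Definition KEY (R : realType) (s q : nat) (key : forall m, nat -> {ffun 'I_s -> 'I_(q ^ m)}) m :=
  forall A, freq R (fun n => key m n == A) n @[n --> \oo] --> ((q%:R : R) ^+ (s * m))^-1.

Section Chain.
Variables (R : realType) (F : finFieldType) (s : nat) (C : 'I_s -> nat -> nat -> F).
Variables (psi1 : nat -> 'I_#|F| -> F) (lam1 : 'I_s -> nat -> F -> 'I_#|F|).
Hypothesis psi1B : forall r, bijective (psi1 r).
Hypothesis lam1B : forall i j, bijective (lam1 i j).
Hypothesis net : forall k m, (0 < m)%N -> is_net #|F| 0 m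
  (fun n => alg_trunc R C psi1 lam1 m (nat_zq F n)) (k * #|F| ^ m).
Variables (psi : nat -> 'I_#|F| -> F) (lam : 'I_s -> nat -> F -> 'I_#|F|) (sn : nat -> zq F).
Hypothesis psiB : forall r, bijective (psi r).
Hypothesis lamB : forall i j, bijective (lam i j).
Hypothesis s0 : (0 < s)%N.

Let key m n := keyv C psi lam m (sn n).

Lemma KEY_UDP m : (0 < m)%N -> KEY R key m <-> UDP R sn (s * m).
Proof.
move=> m0; have PB := Phi_bij psi1B net m0 s0 psiB lamB.
split => h.
- move=> t; have := h (Phi C psi lam t); apply: cvg_trans; apply: near_eq_cvg.
  near=> N; apply: freq_ext => n; rewrite /key keyv_Phi.
  by rewrite (inj_eq (bij_inj PB)).
- move=> A; case: PB => g gK Kg; have := h (g A); apply: cvg_trans; apply: near_eq_cvg.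
  near=> N; apply: freq_ext => n; rewrite /key keyv_Phi.
  by rewrite -(inj_eq (can_inj gK)) Kg.
Unshelve. all: by end_near.
Qed.

Lemma udzq_KEY : ud_zq R sn <-> forall m, (0 < m)%N -> KEY R key m.
Proof.
split => h.
- move=> m m0; apply/KEY_UDP => //; apply: udzq_UDP => //; by rewrite muln_gt0 s0.
- apply: UDP_udzq => k k1; apply: (@UDP_le _ _ _ (s * k)); first by apply/KEY_UDP => //; apply: h.
  by rewrite leq_pmull.
Qed.

End Chain.

End Part4.

Section Part5.
Local Open Scope classical_set_scope.
Local Open Scope ring_scope.

Section Gen.
Variable R : realType.

Lemma prod01 (I : Type) (r : seq I) (u : I -> R) :
  (forall i, 0 <= u i <= 1) -> 0 <= \prod_(i <- r) u i <= 1.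
Proof.
move=> h; elim: r => [|a r IH]; first by rewrite big_nil ler01 lexx.
rewrite big_cons; have /andP[h1 h2] := h a; case/andP: IH => h3 h4.
by rewrite mulr_ge0 //= mulr_ile1.
Qed.

Lemma prod_diff (I : Type) (r : seq I) (u v : I -> R) :
  (forall i, 0 <= u i <= 1) -> (forall i, 0 <= v i <= 1) ->
  `|\prod_(i <- r) u i - \prod_(i <- r) v i| <= \sum_(i <- r) `|u i - v i|.
Proof.
move=> hu hv; elim: r => [|a r IH]; first by rewrite !big_nil subrr normr0.
rewrite !big_cons.
have /andP[U0 U1] := prod01 r hu; have /andP[V0 V1] := prod01 r hv.
have /andP[ua0 ua1] := hu a; have /andP[va0 va1] := hv a.
have -> : u a * \prod_(j <- r) u j - v a * \prod_(j <- r) v j =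
   (u a - v a) * \prod_(j <- r) u j + v a * (\prod_(j <- r) u j - \prod_(j <- r) v j).
  by ring.
apply: (le_trans (ler_normD _ _)); apply: lerD.
- rewrite normrM (ger0_norm U0) -[X in _ <= X]mulr1.
  exact: (ler_pM (normr_ge0 _) U0 (lexx _) U1).
- rewrite normrM (ger0_norm va0) -[X in _ <= X]mul1r.
  exact: (ler_pM va0 (normr_ge0 _) va1 IH).
Qed.

Lemma forall_natr (I : finType) (P : I -> bool) :
  ([forall i, P i] : nat)%:R = \prod_(i : I) ((P i : nat)%:R : R).
Proof.
case: (boolP [forall i, P i]) => [/forallP h|/forallPn [i hi]].
  by rewrite big1 // => i _; rewrite h.
by rewrite (bigD1 i) //= (negbTE hi) mul0r.
Qed.

Lemma card_count M (P : pred nat) :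
  #|[pred a : 'I_M | P a]| = count P (iota 0 M).
Proof.
rewrite -sum1_card big_mkcond /= -(big_mkord xpredT (fun a => if P a then 1%N else 0%N)).
rewrite count_natsum /index_iota subn0; apply: eq_bigr => a _; by case: (P a).
Qed.

Lemma count_real (z : R) M : -1 <= z -> z <= M%:R ->
  `|(count (fun a : nat => a%:R < z) (iota 0 M))%:R - z| <= 1.
Proof.
move=> z1; elim: M => [|M IH] zM.
  rewrite /= mulr0n sub0r normrN; rewrite mulr0n in zM; rewrite ler_norml; apply/andP; split; lra.
rewrite -addn1 iotaD count_cat /= add0n addn0.
case: (lerP z M%:R) => zM'.
  by rewrite addn0; apply: IH.
have -> : count (fun a : nat => a%:R < z) (iota 0 M) = M.
  rewrite -[X in _ = X](size_iota 0 M); apply/eqP; rewrite -all_count; apply/allP => a.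
  rewrite mem_iota add0n => /andP[_ aM]; apply: lt_trans zM'; by rewrite ltr_nat.
rewrite addn1 -natr1 ler_norml; apply/andP; split.
- by move: zM; rewrite -natr1; lra.
- move: zM'; lra.
Qed.

Lemma freq_ge0 P N : 0 <= freq R P N.
Proof. by rewrite /freq divr_ge0. Qed.

Lemma freq_le1 P N : freq R P N <= 1.
Proof.
rewrite /freq; case: N => [|N]; first by rewrite invr0 mulr0 ler01.
rewrite ler_pdivrMr ?ltr0n // mul1r ler_nat.
by rewrite -[X in (_ <= X)%N](size_iota 0 N.+1) count_size.
Qed.

Lemma freq_mono (P Q : pred nat) N : (forall n, P n -> Q n) -> freq R P N <= freq R Q N.
Proof.
move=> h; rewrite /freq ler_wpM2r ?invr_ge0 ?ler0n // ler_nat; exact: sub_count.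
Qed.

Lemma freq_lin (I : finType) (w : I -> R) (P : pred nat) (Q : I -> pred nat) N :
  (forall n, ((P n : nat)%:R : R) = \sum_(d : I) w d * (Q d n : nat)%:R) ->
  freq R P N = \sum_(d : I) w d * freq R (Q d) N.
Proof.
move=> h; rewrite /freq count_natsum natr_sum (eq_bigr _ (fun n _ => h n)) exchange_big.
rewrite mulr_suml; apply: eq_bigr => d _; rewrite count_natsum natr_sum -mulr_sumr.
by rewrite mulrA.
Qed.

Lemma freqT N : (0 < N)%N -> freq R xpredT N = 1.
Proof.
move=> N0; rewrite /freq count_predT size_iota divff //.
by rewrite pnatr_eq0 -lt0n.
Qed.

End Gen.

End Part5.

Section Part6.
Local Open Scope classical_set_scope.
Local Open Scope ring_scope.

Section Disc.
Variables (R : realType) (s : nat) (x : nat -> 'I_s -> R).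

Definition anch (t : 'I_s -> R) n := [forall i, (0 <= x n i) && (x n i < t i)].
Definition cube := [set t : 'I_s -> R | forall i, 0 <= t i <= 1].
Definition Dset N := [set `| freq R (anch t) N - \prod_i t i | | t in cube].

Lemma D_def N : star_discrepancy x N = sup (Dset N).
Proof. by []. Qed.

Lemma Dset_ub N : has_ubound (Dset N).
Proof.
exists 2 => _ [t ht <-]; apply: (le_trans (ler_normB _ _)).
have /andP[p0 p1] := prod01 (index_enum 'I_s) ht.
rewrite ger0_norm ?freq_ge0 // ger0_norm //.
have := freq_le1 R (anch t) N; lra.
Qed.

Lemma D_ge t N : cube t -> `| freq R (anch t) N - \prod_i t i | <= star_discrepancy x N.
Proof. by move=> ht; rewrite D_def; apply: ub_le_sup (Dset_ub N) _ _; exists t. Qed.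

Lemma D_le e N : (forall t, cube t -> `| freq R (anch t) N - \prod_i t i | <= e) ->
  star_discrepancy x N <= e.
Proof.
move=> h; rewrite D_def; apply: ge_sup.
  by exists `| freq R (anch (fun=> 0)) N - \prod_(i : 'I_s) (0 : R) |; exists (fun=> 0) => // i; rewrite lexx ler01.
by move=> _ [t ht <-]; apply: h.
Qed.

Lemma D_ge0 N : 0 <= star_discrepancy x N.
Proof.
apply: le_trans (D_ge N (t := fun=> 0) _); first exact: normr_ge0.
by move=> i; rewrite lexx ler01.
Qed.

Definition sgn (f : {ffun 'I_s -> bool}) : R := \prod_i (if f i then -1 else 1).

Lemma ie_prod (a b : 'I_s -> R) :
  \prod_i (b i - a i) = \sum_(f : {ffun 'I_s -> bool}) sgn f * \prod_i (if f i then a i else b i).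
Proof.
have e1 : forall i, b i - a i = \sum_(c : bool) (if c then - a i else b i).
  by move=> i; rewrite big_bool /= addrC.
rewrite (eq_bigr _ (fun i _ => e1 i)) bigA_distr_bigA /=; apply: eq_bigr => f _.
rewrite /sgn -big_split /=; apply: eq_bigr => i _; case: (f i) => /=; ring.
Qed.

Lemma sgn_norm f : `|sgn f| = 1.
Proof. by rewrite /sgn normr_prod big1 // => i _; case: (f i); rewrite ?normrN normr1. Qed.

Definition box (a b : 'I_s -> R) n := [forall i, (a i <= x n i) && (x n i < b i)].

Lemma box_bound (a b : 'I_s -> R) N : (forall i, 0 <= a i <= b i) -> (forall i, b i <= 1) ->
  `| freq R (box a b) N - \prod_i (b i - a i) | <= (2 ^ s)%:R * star_discrepancy x N.
Proof.
move=> hab hb1.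
pose tf (f : {ffun 'I_s -> bool}) i := if f i then a i else b i.
have cf : forall f, cube (tf f).
  move=> f i; rewrite /tf; have /andP[h1 h2] := hab i; have h3 := hb1 i.
  case: (f i); apply/andP; split => //; try lra.
have e1 : freq R (box a b) N = \sum_f sgn f * freq R (anch (tf f)) N.
  apply: freq_lin => n; rewrite forall_natr.
  pose A i : R := ((0 <= x n i) && (x n i < a i) : nat)%:R.
  pose B i : R := ((0 <= x n i) && (x n i < b i) : nat)%:R.
  have -> : \prod_i (((a i <= x n i) && (x n i < b i) : nat)%:R : R) = \prod_i (B i - A i).
    apply: eq_bigr => i _; rewrite /A /B; have /andP[h1 h2] := hab i.
    case: (lerP (a i) (x n i)) => h3 /=.
    - by rewrite (le_trans h1 h3) /= subr0.
    - by rewrite (lt_le_trans h3 h2) /= !andbT subrr.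
  rewrite ie_prod; apply: eq_bigr => f _; congr (_ * _).
  rewrite /anch forall_natr; apply: eq_bigr => i _; rewrite /tf /A /B; by case: (f i).
have e2 : \prod_i (b i - a i) = \sum_f sgn f * \prod_i tf f i.
  by rewrite ie_prod.
rewrite e1 e2 -sumrB.
apply: (le_trans (ler_norm_sum _ _ _)).
have -> : (2 ^ s)%:R * star_discrepancy x N =
   \sum_(f : {ffun 'I_s -> bool}) star_discrepancy x N.
  by rewrite sumr_const card_ffun card_bool card_ord mulr_natl.
apply: ler_sum => f _; rewrite -mulrBr normrM sgn_norm mul1r; exact: D_ge.
Qed.

End Disc.

End Part6.

Section Part7.
Local Open Scope classical_set_scope.
Local Open Scope ring_scope.

Lemma sum_trick (R : realType) (I : finType) (g : I -> R) (w eta : R) (i0 : I) :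
  #|I|%:R * w = 1 -> \sum_i g i = 1 -> (forall i, w - eta <= g i) -> 0 <= eta ->
  `|w - g i0| <= #|I|%:R * eta.
Proof.
move=> cw sg hg e0.
have c1 : (1 <= #|I|)%N by apply/card_gt0P; exists i0.
have c1R : 1 <= (#|I|%:R : R) by rewrite ler1n.
have ce : eta <= #|I|%:R * eta by rewrite ler_peMl.
have h1 : \sum_i (g i - (w - eta)) = #|I|%:R * eta.
  rewrite sumrB sg sumr_const.
  rewrite -[_ *+ _]mulr_natl.
  rewrite mulrBr cw; ring.
have h2 : g i0 - (w - eta) <= \sum_i (g i - (w - eta)).
  rewrite (bigD1 i0) //= lerDl; apply: sumr_ge0 => i _; rewrite subr_ge0; exact: hg.
rewrite h1 in h2; have h3 := hg i0.
rewrite ler_norml; apply/andP; split; lra.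
Qed.

Section Cells.
Variables (R : realType) (s q : nat) (x : nat -> 'I_s -> R)
  (key : forall m, nat -> {ffun 'I_s -> 'I_(q ^ m)}).
Hypothesis s0 : (0 < s)%N.
Hypothesis q1 : (1 < q)%N.
Hypothesis hb : forall m n i,
  (key m n i)%:R / q%:R ^+ m <= x n i <= (key m n i).+1%:R / q%:R ^+ m.

Let Q m : R := q%:R ^+ m.
Let Q0 m : 0 < Q m. Proof. by rewrite exprn_gt0 // ltr0n; lia. Qed.
Let Q1 m : 1 <= Q m. Proof. by rewrite exprn_ege1 // ler1n; lia. Qed.
Let Qi1 m : (Q m)^-1 <= 1. Proof. by rewrite invf_le1 ?Q0 ?Q1. Qed.
Definition wq m : R := ((q%:R : R) ^+ (s * m))^-1.

Lemma wq_prod m : \prod_(i : 'I_s) (Q m)^-1 = wq m.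
Proof. by rewrite prodr_const card_ord /wq /Q exprVn -exprM mulnC. Qed.

Lemma card_wq m : (#|{ffun 'I_s -> 'I_(q ^ m)}|%:R : R) * wq m = 1.
Proof.
rewrite card_ffun !card_ord /wq natrX natrX -exprM mulnC mulfV //.
by rewrite expf_neq0 // pnatr_eq0; lia.
Qed.

Lemma A_le m (A : 'I_(q ^ m)) : (A.+1)%:R / Q m <= 1.
Proof. by rewrite ler_pdivrMr // mul1r /Q -natrX ler_nat. Qed.

Lemma lower_cell m (A : {ffun 'I_s -> 'I_(q ^ m)}) (eps : R) N :
  0 < eps -> eps <= (Q m)^-1 ->
  wq m - s%:R * eps - (2 ^ s)%:R * star_discrepancy x N <= freq R (fun n => key m n == A) N.
Proof.
move=> e0 e1.
pose a i := (A i)%:R / Q m + eps; pose b i := (A i).+1%:R / Q m.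
have hab : forall i, 0 <= a i <= b i.
  move=> i; rewrite /a /b addr_ge0 ?divr_ge0 ?ler0n ?(ltW (Q0 m)) ?(ltW e0) //=.
  by rewrite -natr1 mulrDl lerD2l div1r.
have hb1 : forall i, b i <= 1 by move=> i; exact: A_le.
have hbox := @box_bound R s x a b N hab hb1.
have hsub : freq R (box x a b) N <= freq R (fun n => key m n == A) N.
  apply: freq_mono => n /forallP hn; apply/eqP/ffunP => i; apply: val_inj => /=.
  have /andP[h1 h2] := hn i; have /andP[h3 h4] := hb m n i.
  rewrite /a /b in h1 h2.
  have u1 : (key m n i < (A i).+1)%N.
    have := le_lt_trans h3 h2; by rewrite ltr_pM2r ?invr_gt0 // ltr_nat.
  have u2 : (A i < (key m n i).+1)%N.
    have : (A i)%:R / Q m < (key m n i).+1%:R / Q m.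
      apply: lt_le_trans h4; apply: lt_le_trans h1; by rewrite ltrDl.
    by rewrite ltr_pM2r ?invr_gt0 // ltr_nat.
  lia.
have hprod : `|\prod_i (b i - a i) - wq m| <= s%:R * eps.
  rewrite -wq_prod.
  have -> : s%:R * eps = \sum_(i : 'I_s) `|(b i - a i) - (Q m)^-1|.
    rewrite (eq_bigr (fun _ => eps)) ?sumr_const ?card_ord ?mulr_natl // => i _.
    rewrite /a /b -natr1 mulrDl div1r.
    have -> : (A i)%:R / Q m + (Q m)^-1 - ((A i)%:R / Q m + eps) - (Q m)^-1 = - eps by ring.
    by rewrite normrN gtr0_norm.
  apply: prod_diff => i.
  - rewrite /a /b -natr1 mulrDl div1r.
    have -> : (A i)%:R / Q m + (Q m)^-1 - ((A i)%:R / Q m + eps) = (Q m)^-1 - eps by ring.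
    rewrite subr_ge0 e1 /=; have := Qi1 m; lra.
  - by rewrite invr_ge0 (ltW (Q0 m)) /= Qi1.
rewrite ler_norml in hbox; case/andP: hbox => hb2 _.
rewrite ler_norml in hprod; case/andP: hprod => hp _.
lra.
Qed.

Lemma sum_cells m N : (0 < N)%N ->
  \sum_(A : {ffun 'I_s -> 'I_(q ^ m)}) freq R (fun n => key m n == A) N = 1.
Proof.
move=> N0; rewrite -(freqT R N0); symmetry.
rewrite (@freq_lin R {ffun 'I_s -> 'I_(q ^ m)} (fun=> 1) xpredT (fun A n => key m n == A) N).
  by apply: eq_bigr => A _; rewrite mul1r.
move=> n.
rewrite (bigD1 (key m n)) //= eqxx mul1r big1 ?addr0 // => A /negPf.
by rewrite eq_sym => ->; rewrite mulr0.
Qed.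

Lemma cube_KEY : ud_cube x -> forall m, KEY R key m.
Proof.
move=> /= hD m A; apply/cvgrPdist_le => e e0.
pose c : R := #|{ffun 'I_s -> 'I_(q ^ m)}|%:R.
have c0 : 0 < c by rewrite ltr0n; apply/card_gt0P; exists A.
pose eps := Num.min ((Q m)^-1) (e / (2 * c * s%:R)).
have sR : 0 < (s%:R : R) by rewrite ltr0n.
have eps0 : 0 < eps by rewrite lt_min invr_gt0 Q0 /= divr_gt0 // !mulr_gt0.
have eps1 : eps <= (Q m)^-1 by rewrite ge_min lexx.
have eps2 : c * (s%:R * eps) <= e / 2.
  have : eps <= e / (2 * c * s%:R) by rewrite ge_min lexx orbT.
  rewrite ler_pdivlMr ?mulr_gt0 // => h; rewrite ler_pdivlMr //; move: h.
  have -> : c * (s%:R * eps) * 2 = eps * (2 * c * s%:R) by ring.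
  done.
have d0 : 0 < e / (2 * c * (2 ^ s)%:R) by rewrite divr_gt0 // !mulr_gt0 // ltr0n expn_gt0.
move/cvgrPdist_le : hD => /(_ _ d0) hD.
near=> N.
have hDN : `|0 - star_discrepancy x N| <= e / (2 * c * (2 ^ s)%:R) by near: N.
have N0 : (0 < N)%N by near: N; exists 1%N => // n /=.
rewrite sub0r normrN ger0_norm ?D_ge0 // in hDN.
pose eta := s%:R * eps + (2 ^ s)%:R * star_discrepancy x N.
have eta0 : 0 <= eta by rewrite addr_ge0 ?mulr_ge0 ?ler0n ?(ltW eps0) ?D_ge0.
have := @sum_trick R _ (fun A => freq R (fun n => key m n == A) N) (wq m) eta A
   (card_wq m) (sum_cells m N0).
move=> /(_ _ eta0) h; apply: le_trans (h _) _.
  by move=> A'; rewrite opprD addrA; apply: lower_cell.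
rewrite -/c /eta mulrDr.
have : c * ((2 ^ s)%:R * star_discrepancy x N) <= e / 2.
  rewrite ler_pdivlMr ?mulr_gt0 // in hDN.
  rewrite ler_pdivlMr //; move: hDN.
  have -> : c * ((2 ^ s)%:R * star_discrepancy x N) * 2 =
    star_discrepancy x N * (2 * c * (2 ^ s)%:R) by ring.
  done.
move: eps2; lra.
Unshelve. all: by end_near.
Qed.

End Cells.

End Part7.

Section Part8.
Local Open Scope classical_set_scope.
Local Open Scope ring_scope.

Section Cells2.
Variables (R : realType) (s q : nat) (x : nat -> 'I_s -> R)
  (key : forall m, nat -> {ffun 'I_s -> 'I_(q ^ m)}).
Hypothesis s0 : (0 < s)%N.
Hypothesis q1 : (1 < q)%N.
Hypothesis hb : forall m n i,
  (key m n i)%:R / q%:R ^+ m <= x n i <= (key m n i).+1%:R / q%:R ^+ m.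

Let Q m : R := q%:R ^+ m.
Let Q0 m : 0 < Q m. Proof. by rewrite exprn_gt0 // ltr0n; lia. Qed.

Definition cellset c m (t : 'I_s -> R) :=
  [pred A : {ffun 'I_s -> 'I_(q ^ m)} | [forall i, ((A i + c)%N%:R / Q m < t i)]].

Lemma card_cellset c m t : #|cellset c m t| =
  (\prod_(i : 'I_s) #|[pred a : 'I_(q ^ m) | ((a + c)%N%:R / Q m < t i)%R]|)%N.
Proof.
rewrite (eq_card (B := family (fun i => [pred a : 'I_(q ^ m) | (a + c)%N%:R / Q m < t i]))).
  by rewrite card_family foldrE big_map big_enum.
move=> A; rewrite [in LHS]inE; apply/forallP/familyP => h i; have := h i; by rewrite !inE.
Qed.

Lemma cell_card c m t : (c <= 1)%N -> cube t ->
  `| #|cellset c m t|%:R * wq R s q m - \prod_i t i | <= s%:R * (2 / Q m).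
Proof.
move=> c1 ht; rewrite card_cellset natr_prod -(wq_prod R s q m) -big_split /=.
have hi : forall i, `| (#|[pred a : 'I_(q ^ m) | (a + c)%N%:R / Q m < t i]|%:R / Q m) - t i |
          <= 2 / Q m /\ 0 <= #|[pred a : 'I_(q ^ m) | (a + c)%N%:R / Q m < t i]|%:R / Q m <= 1.
  move=> i; rewrite (card_count (q ^ m) (fun a => (a + c)%N%:R / Q m < t i)).
  rewrite (eq_count (a2 := fun a : nat => a%:R < t i * Q m - c%:R)); last first.
    by move=> a; rewrite ltr_pdivrMr // natrD; apply/idP/idP; lra.
  have /andP[t0 t1] := ht i.
  have hz : -1 <= t i * Q m - c%:R.
    have : (c%:R : R) <= 1 by rewrite lern1.
    have : 0 <= t i * Q m by rewrite mulr_ge0 // ltW.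
    lra.
  have hz2 : t i * Q m - c%:R <= (q ^ m)%N%:R.
    rewrite natrX -/(Q m); have : t i * Q m <= Q m by rewrite ler_piMl // ltW.
    have : (0 : R) <= c%:R by [].
    lra.
  have := count_real hz hz2; set cnt := count _ _ => hc.
  have cntQ : (cnt <= q ^ m)%N.
    by rewrite /cnt -[X in (_ <= X)%N](size_iota 0 (q ^ m)) count_size.
  split.
  - have -> : cnt%:R / Q m - t i = (cnt%:R - t i * Q m) / Q m.
      by field; rewrite gt_eqF.
    rewrite normrM [`|(Q m)^-1|]gtr0_norm ?invr_gt0 // ler_pM2r ?invr_gt0 //.
    move: hc; rewrite ler_norml => /andP[h1 h2]; rewrite ler_norml.
    have : (c%:R : R) <= 1 by rewrite lern1.
    have : (0 : R) <= c%:R by [].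
    move=> *; apply/andP; split; lra.
  - rewrite divr_ge0 ?ler0n ?(ltW (Q0 m)) //= ler_pdivrMr // mul1r /Q -natrX ler_nat //.
have -> : s%:R * (2 / Q m) = \sum_(i : 'I_s) (2 / Q m).
  by rewrite sumr_const card_ord mulr_natl.
apply: le_trans (prod_diff _ _ _) _.
- by move=> i; case: (hi i).
- by move=> i; apply: ht.
- by apply: ler_sum => i _; case: (hi i).
Qed.

Lemma sum_ind (I : finType) (S : pred I) (y : R) :
  \sum_(A : I) ((A \in S : nat)%:R * y) = #|S|%:R * y.
Proof.
rewrite -mulr_suml -natr_sum -sum1_card; congr (_%:R * _).
by rewrite [RHS]big_mkcond /=; apply: eq_bigr => A _; case: (A \in S).
Qed.

Lemma KEY_cube : (forall m, (0 < m)%N -> KEY R key m) -> ud_cube x.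
Proof.
move=> h /=; apply/cvgrPdist_le => e e0.
pose K := Num.Def.archi_bound (4 * s%:R / e); pose m := K.+1.
have hK : 4 * s%:R / e < K%:R by apply: archi_boundP; rewrite divr_ge0 ?mulr_ge0 // ltW.
have hQ : 4 * s%:R / e < Q m.
  apply: lt_trans hK _; rewrite /Q -natrX ltr_nat; apply: ltn_trans (ltn_expl _ q1).
  exact: ltnSn.
have hcell : s%:R * (2 / Q m) <= e / 2.
  rewrite ltr_pdivrMr // in hQ.
  rewrite mulrA ler_pdivrMr //; lra.
pose c : R := #|{ffun 'I_s -> 'I_(q ^ m)}|%:R.
have c0 : 0 < c.
  have qm0 : (0 < q ^ m)%N by rewrite expn_gt0; apply/orP; left; lia.
  by rewrite ltr0n; apply/card_gt0P; exists [ffun=> Ordinal qm0].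
pose d := e / (2 * c).
have d0 : 0 < d by rewrite divr_gt0 // mulr_gt0.
have hAll : \forall N \near \oo, forall A : {ffun 'I_s -> 'I_(q ^ m)},
    `| wq R s q m - freq R (fun n => key m n == A) N | <= d.
  apply: filter_forall => A; have := h m (ltn0Sn _) A.
  by move/cvgrPdist_le => /(_ _ d0).
near=> N.
have hA : forall A : {ffun 'I_s -> 'I_(q ^ m)},
    `| wq R s q m - freq R (fun n => key m n == A) N | <= d by near: N.
rewrite sub0r normrN ger0_norm ?D_ge0 //; apply: D_le => t ht.
have cd : c * d = e / 2 by rewrite /d; field; rewrite gt_eqF.
have inS : forall (S : pred {ffun 'I_s -> 'I_(q ^ m)}),
    freq R (fun n => key m n \in S) N =
    \sum_A ((A \in S : nat)%:R * freq R (fun n => key m n == A) N).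
  move=> S; apply: (@freq_lin R _ (fun A => (A \in S : nat)%:R)) => n.
  rewrite (bigD1 (key m n)) //= eqxx mulr1 big1 ?addr0 // => A hA'.
  by rewrite eq_sym (negPf hA') mulr0.
have cS : forall (S : pred {ffun 'I_s -> 'I_(q ^ m)}), #|S|%:R <= c.
  by move=> S; rewrite ler_nat max_card.
have up : freq R (anch x t) N <= \prod_i t i + e.
  have h1 : freq R (anch x t) N <= freq R (fun n => key m n \in cellset 0 m t) N.
    apply: freq_mono => n /forallP hn; rewrite inE; apply/forallP => i.
    have /andP[_ h2] := hn i; have /andP[h3 _] := hb m n i.
    by rewrite addn0; apply: le_lt_trans h2.
  have h2 : freq R (fun n => key m n \in cellset 0 m t) N <=
      #|cellset 0 m t|%:R * (wq R s q m + d).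
    rewrite inS -sum_ind; apply: ler_sum => A _; case: (A \in cellset 0 m t) => /=.
      rewrite !mul1r; have := hA A; rewrite ler_norml; case/andP => *; lra.
    by rewrite !mul0r.
  have h3 := cell_card m (leq0n 1) ht.
  have h4 : #|cellset 0 m t|%:R * d <= c * d by rewrite ler_pM2r // cS.
  move: h3; rewrite ler_norml mulrDr in h2 *; case/andP => h5 h6.
  move: h1 h2 h4 hcell cd h6; lra.
have lo : \prod_i t i - e <= freq R (anch x t) N.
  have h1 : freq R (fun n => key m n \in cellset 1 m t) N <= freq R (anch x t) N.
    apply: freq_mono => n; rewrite inE => /forallP hn; apply/forallP => i.
    have := hn i; have /andP[h3 h4] := hb m n i; rewrite addn1 => h5.
    rewrite (le_lt_trans h4 h5) andbT; apply: le_trans h3.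
    by rewrite divr_ge0 ?ler0n // ltW.
  have h2 : #|cellset 1 m t|%:R * (wq R s q m - d) <=
      freq R (fun n => key m n \in cellset 1 m t) N.
    rewrite inS -sum_ind; apply: ler_sum => A _; case: (A \in cellset 1 m t) => /=.
      rewrite !mul1r; have := hA A; rewrite ler_norml; case/andP => *; lra.
    by rewrite !mul0r.
  have h3 := cell_card m (leqnn 1) ht.
  have h4 : #|cellset 1 m t|%:R * d <= c * d by rewrite ler_pM2r // cS.
  move: h3; rewrite ler_norml mulrBr in h2 *; case/andP => h5 h6.
  move: h1 h2 h4 hcell cd h5; lra.
rewrite ler_norml; apply/andP; split; lra.
Unshelve. all: by end_near.
Qed.

End Cells2.

End Part8.

Theorem theorem2 (R : realType) (F : finFieldType) (s : nat)
    (C : 'I_s -> nat -> nat -> F) :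
  (1 <= s)%N ->
  finite_row C ->
  optimal_row_lengths C ->
  (exists (psi1 : nat -> 'I_#|F| -> F) (lam1 : 'I_s -> nat -> F -> 'I_#|F|),
      (forall r, bijective (psi1 r)) /\
      (exists r0, forall r, (r0 <= r)%N -> psi1 r (digit0 F) = 0) /\
      (forall i j, bijective (lam1 i j)) /\
      is_Tseq #|F| (fun _ => 0%N)
        (fun n => alg_point R C psi1 lam1 (nat_zq F n))
        (fun m n => alg_trunc R C psi1 lam1 m (nat_zq F n))) ->
  forall (psi : nat -> 'I_#|F| -> F) (lam : 'I_s -> nat -> F -> 'I_#|F|)
         (sn : nat -> zq F),
    (forall r, bijective (psi r)) ->
    (forall i j, bijective (lam i j)) ->
    (ud_cube (fun n => alg_point R C psi lam (sn n)) <-> ud_zq R sn).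
Proof.
move=> s1 _ _ [psi1 [lam1 [psi1B [_ [lam1B [_ [_ hnet]]]]]]] psi lam sn psiB lamB.
have net : forall k m, (0 < m)%N -> is_net #|F| 0 m
    (fun n => alg_trunc R C psi1 lam1 m (nat_zq F n)) (k * #|F| ^ m).
  by move=> k m m0; apply: hnet.
have hb : forall m n i,
  ((keyv C psi lam m (sn n) i : nat)%:R / (#|F|%:R : R) ^+ m <=
     alg_point R C psi lam (sn n) i <=
   (keyv C psi lam m (sn n) i).+1%:R / #|F|%:R ^+ m).
  move=> m n i; rewrite keyvE; have [h1 h2] := point_bounds R C psi lam (sn n) i m.
  by rewrite h1 h2.
rewrite (udzq_KEY psi1B net sn psiB lamB s1).
split.
- move=> h m _; exact: (cube_KEY s1 (q_gt1 F) hb h).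
- exact: (KEY_cube s1 (q_gt1 F) hb).
Qed.
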